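(* The saturation of a finite sample set is finite.
   Context: Basic terms are built from a countably infinite set of variables using binary $\cdot$, unary ${}'$ and constant $1$. Fix a countably infinite set of time variables. Samples are the formal expressions generated by the grammar $\alpha::=\kappa\mid t[\alpha]\mid\mathrm{suc}(\alpha)\mid\mathrm{last}(t)$, where $\kappa$ is a time variable and $t$ a basic term. Let $\leadsto$ be the binary relation on samples given by: $t[\alpha]\leadsto\alpha$; $\mathrm{suc}(\alpha)\leadsto\alpha$; $t[\alpha]\leadsto t[\mathrm{last}(t)]$; $(tu)[\alpha]\leadsto t[u[\alpha]]$; $t'[\alpha]\leadsto t[t'[\alpha]]$; $t'[\alpha]\leadsto t[\mathrm{suc}(t'[\alpha])]$. The saturation of a set $\Delta$ of samples is $\{\beta\mid\alpha\leadsto^*\beta\text{ for some }\alpha\in\Delta\}$, where $\leadsto^*$ is the reflexive transitive closure of $\leadsto$. *)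

(* Defs.v *)
From Stdlib Require Import List Relations.

Inductive term : Type :=
| tvar : nat -> term
| tmul : term -> term -> term
| tstar : term -> term
| tone : term.

Inductive sample : Type :=
| stime : nat -> sample
| sapp : term -> sample -> sample
| ssuc : sample -> sample
| slast : term -> sample.

Inductive step : sample -> sample -> Prop :=
| st_app_arg : forall t a, step (sapp t a) a
| st_suc : forall a, step (ssuc a) a
| st_last : forall t a, step (sapp t a) (sapp t (slast t))
| st_mul : forall t u a, step (sapp (tmul t u) a) (sapp t (sapp u a))
| st_star1 : forall t a, step (sapp (tstar t) a) (sapp t (sapp (tstar t) a))
| st_star2 : forall t a, step (sapp (tstar t) a) (sapp t (ssuc (sapp (tstar t) a))).

Definition saturation (Delta : sample -> Prop) (b : sample) : Prop :=
  exists a, Delta a /\ clos_refl_trans sample step a b.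

Definition finite_set (S : sample -> Prop) : Prop :=
  exists L : list sample, forall b, S b <-> In b L.

(* Main.v *)
Require Import Defs.
From Stdlib Require Import List Relations.
From Stdlib Require Import Classical.
Import ListNotations.

Inductive frame := Fapp (t : term) | Fsuc.

Fixpoint plug (C : list frame) (b : sample) : sample :=
  match C with
  | [] => b
  | Fapp t :: C' => sapp t (plug C' b)
  | Fsuc :: C' => ssuc (plug C' b)
  end.

Fixpoint ctx (t : term) : list (list frame) :=
  [] :: [Fapp t] :: match t with
  | tmul u v => map (fun C => C ++ [Fapp v]) (ctx u) ++ ctx v
  | tstar u => map (fun C => C ++ [Fapp t]) (ctx u)
               ++ map (fun C => C ++ [Fsuc; Fapp t]) (ctx u)
  | _ => [] end.

Fixpoint subt (t : term) : list term :=
  t :: match t with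
       | tmul u v => subt u ++ subt v
       | tstar u => subt u
       | _ => [] end.

Lemma ctx_hd t : In [Fapp t] (ctx t).
Proof. destruct t; simpl; auto. Qed.

Lemma L1 t : forall f C, In (f :: C) (ctx t) -> In C (ctx t).
Proof.
  induction t; simpl; intros f C H;
    destruct H as [H|[H|H]]; try discriminate;
    try (injection H; intros; subst; auto); try contradiction.
  - apply in_app_or in H; destruct H as [H|H].
    + apply in_map_iff in H; destruct H as [C0 [E HC0]].
      destruct C0 as [|f' C1]; simpl in E; injection E; intros; subst; auto.
      right; right; apply in_or_app; left; apply in_map_iff; eauto.
    + right; right; apply in_or_app; right; eauto.
  - apply in_app_or in H; destruct H as [H|H];
      apply in_map_iff in H; destruct H as [C0 [E HC0]];
      destruct C0 as [|f' C1]; simpl in E; injection E; intros; subst; auto.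
    + right; right; apply in_or_app; left; apply in_map_iff; eauto.
    + right; right; apply in_or_app; right; apply in_map_iff; eauto.
Qed.

Lemma L2 t : forall w C, In (Fapp w :: C) (ctx t) -> In w (subt t).
Proof.
  induction t; simpl; intros w C H;
    destruct H as [H|[H|H]]; try discriminate;
    try (injection H; intros; subst; auto); try contradiction.
  - apply in_app_or in H; destruct H as [H|H].
    + apply in_map_iff in H; destruct H as [C0 [E HC0]].
      destruct C0 as [|f' C1]; simpl in E; injection E; intros; subst.
      * right; apply in_or_app; right; match goal with |- In ?x _ => destruct x; simpl; auto end.
      * right; apply in_or_app; left; eauto.
    + right; apply in_or_app; right; eauto.
  - apply in_app_or in H; destruct H as [H|H];
      apply in_map_iff in H; destruct H as [C0 [E HC0]];
      destruct C0 as [|f' C1]; simpl in E; injection E; intros; subst; auto;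
      try discriminate; right; eauto.
Qed.

Lemma L3 t : forall a b C, In (Fapp (tmul a b) :: C) (ctx t) ->
  In (Fapp a :: Fapp b :: C) (ctx t).
Proof.
  induction t; simpl; intros a b C H;
    destruct H as [H|[H|H]]; try discriminate;
    try (injection H; intros; subst); try contradiction; try discriminate.
  - right; right; apply in_or_app; left; apply in_map_iff.
    exists [Fapp a]; split; auto. apply ctx_hd.
  - apply in_app_or in H; destruct H as [H|H].
    + apply in_map_iff in H; destruct H as [C0 [E HC0]].
      destruct C0 as [|f' C1]; simpl in E; injection E; intros; subst.
      * right; right; apply in_or_app; right. apply IHt2. apply ctx_hd.
      * right; right; apply in_or_app; left; apply in_map_iff.
        exists (Fapp a :: Fapp b :: C1); split; auto.
    + right; right; apply in_or_app; right; eauto.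
  - apply in_app_or in H; destruct H as [H|H];
      apply in_map_iff in H; destruct H as [C0 [E HC0]];
      destruct C0 as [|f' C1]; simpl in E; injection E; intros; subst;
      try discriminate.
    + right; right; apply in_or_app; left; apply in_map_iff.
      exists (Fapp a :: Fapp b :: C1); split; auto.
    + right; right; apply in_or_app; right; apply in_map_iff.
      exists (Fapp a :: Fapp b :: C1); split; auto.
Qed.

Lemma L4 t : forall P a C, In (Fapp (tstar a) :: C) (ctx t) ->
  (P = [Fapp a] \/ P = [Fapp a; Fsuc]) ->
  In (P ++ Fapp (tstar a) :: C) (ctx t).
Proof.
  induction t as [n|t1 IHt1 t2 IHt2|t IHt|]; simpl; intros P a C H HP;
    destruct H as [H|[H|H]]; try discriminate;
    try (injection H; intros; subst); try contradiction; try discriminate.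
  - apply in_app_or in H; destruct H as [H|H].
    + apply in_map_iff in H; destruct H as [C0 [E HC0]].
      destruct C0 as [|f' C1]; simpl in E; injection E; intros; subst.
      * right; right; apply in_or_app; right. apply IHt2; auto. apply ctx_hd.
      * right; right; apply in_or_app; left; apply in_map_iff.
        exists (P ++ Fapp (tstar a) :: C1); split; auto.
        rewrite <- app_assoc; reflexivity.
    + right; right; apply in_or_app; right; eauto.
  - destruct HP; subst; right; right; apply in_or_app;
      [left|right]; apply in_map_iff; exists [Fapp a]; split; auto;
      apply ctx_hd.
  - apply in_app_or in H; destruct H as [H|H];
      apply in_map_iff in H; destruct H as [C0 [E HC0]];
      destruct C0 as [|f' C1]; simpl in E; injection E; intros; subst;
      try discriminate.
    + destruct HP; subst; right; right; apply in_or_app;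
        [left|right]; apply in_map_iff; exists [Fapp a]; split; auto;
        apply ctx_hd.
    + right; right; apply in_or_app; left; apply in_map_iff.
      exists (P ++ Fapp (tstar a) :: C1); split; auto.
      rewrite <- app_assoc; reflexivity.
    + right; right; apply in_or_app; right; apply in_map_iff.
      exists (P ++ Fapp (tstar a) :: C1); split; auto.
      rewrite <- app_assoc; reflexivity.
Qed.

Fixpoint subs (a : sample) : list sample :=
  a :: match a with sapp _ b => subs b | ssuc b => subs b | _ => [] end.

Fixpoint sterms (a : sample) : list term :=
  match a with
  | sapp t b => subt t ++ sterms b
  | ssuc b => sterms b
  | slast t => subt t
  | stime _ => []
  end.

Lemma subt_trans s : forall w t, In w (subt t) -> In t (subt s) -> In w (subt s).
Proof.
  induction s; simpl; intros w t H1 H2; destruct H2 as [H2|H2]; subst; auto;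
    try contradiction.
  - apply in_app_or in H2; right; apply in_or_app; destruct H2; eauto.
  - right; eauto.
Qed.

Lemma sterms_sub a : forall w t, In t (sterms a) -> In w (subt t) -> In w (sterms a).
Proof.
  induction a; simpl; intros w t1 H1 H2; try contradiction.
  - apply in_app_or in H1; apply in_or_app; destruct H1; [left|right];
      eauto using subt_trans.
  - eauto.
  - eauto using subt_trans.
Qed.

Lemma subs_app a : forall t x, In (sapp t x) (subs a) ->
  In x (subs a) /\ In t (sterms a).
Proof.
  induction a; simpl; intros t1 x H; destruct H as [H|H]; try discriminate;
    try contradiction.
  - injection H; intros; subst. split.
    + right; destruct x; simpl; auto.
    + apply in_or_app; left; destruct t1; simpl; auto.
  - destruct (IHa _ _ H); split; auto. apply in_or_app; auto.
  - destruct (IHa _ _ H); split; auto.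
Qed.

Lemma subs_suc a : forall x, In (ssuc x) (subs a) -> In x (subs a).
Proof.
  induction a; simpl; intros x H; destruct H as [H|H]; try discriminate;
    try contradiction.
  - right; auto.
  - injection H; intros; subst. right; destruct x; simpl; auto.
  - right; auto.
Qed.

Section Main.
Variable L : list sample.
Definition Tl := flat_map sterms L.
Definition Base := flat_map subs L ++ map slast Tl.
Definition Cs : list (list frame) := [] :: flat_map ctx Tl.
Definition Good (g : sample) := exists C b, g = plug C b /\ In C Cs /\ In b Base.

Lemma Tl_sub t w : In t Tl -> In w (subt t) -> In w Tl.
Proof.
  unfold Tl; intros H1 H2; apply in_flat_map in H1; destruct H1 as [a [Ha Ht]].
  apply in_flat_map; exists a; split; eauto using sterms_sub.
Qed.

Lemma in_Cs t C : In t Tl -> In C (ctx t) -> In C Cs.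
Proof. intros; right; apply in_flat_map; eauto. Qed.

Lemma last_base t : In t Tl -> In (slast t) Base.
Proof. intros; unfold Base; apply in_or_app; right; apply in_map; auto. Qed.

Lemma top_step w x y C b : In (Fapp w :: C) Cs -> x = plug C b -> In b Base ->
  step (sapp w x) y -> Good y.
Proof.
  intros HC Ex Hb Hs. destruct HC as [HC|HC]; [discriminate|].
  apply in_flat_map in HC; destruct HC as [t [Ht HC]].
  inversion Hs; subst.
  - exists C, b; repeat split; auto. eapply in_Cs; eauto using L1.
  - assert (Hw : In w Tl) by eauto using Tl_sub, L2.
    exists [Fapp w], (slast w); repeat split; auto.
    + eapply in_Cs; eauto using ctx_hd.
    + apply last_base; auto.
  - exists (Fapp t0 :: Fapp u :: C), b; repeat split; auto.
    eapply in_Cs; eauto using L3.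
  - exists ([Fapp t0] ++ Fapp (tstar t0) :: C), b; repeat split; auto.
    eapply in_Cs; eauto. apply L4; auto.
  - exists ([Fapp t0; Fsuc] ++ Fapp (tstar t0) :: C), b; repeat split; auto.
    eapply in_Cs; eauto. apply L4; auto.
Qed.

Lemma base_step b y : In b Base -> step b y -> Good y.
Proof.
  intros Hb Hs. unfold Base in Hb. apply in_app_or in Hb. destruct Hb as [Hb|Hb].
  - apply in_flat_map in Hb; destruct Hb as [a [Ha Hb]].
    destruct b; try solve [inversion Hs].
    + destruct (subs_app _ _ _ Hb) as [Hx Ht].
      assert (HT : In t Tl) by (unfold Tl; apply in_flat_map; eauto).
      assert (Hxb : In b Base)
        by (unfold Base; apply in_or_app; left; apply in_flat_map; eauto).
      eapply (top_step t b y [] b); eauto. eapply in_Cs; eauto using ctx_hd.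
    + inversion Hs; subst. exists [], y; split; [reflexivity|split; [left; reflexivity|]].
      unfold Base; apply in_or_app; left; apply in_flat_map;
      eauto using subs_suc.
  - apply in_map_iff in Hb; destruct Hb as [t [E _]]; subst; inversion Hs.
Qed.

Lemma good_step x y : Good x -> step x y -> Good y.
Proof.
  intros [C [b [E [HC Hb]]]] Hs; subst.
  destruct C as [|f C]; simpl in Hs.
  - eauto using base_step.
  - destruct f.
    + eapply top_step; eauto.
    + inversion Hs; subst. exists C, b; repeat split; auto.
      destruct HC as [HC|HC]; [discriminate|].
      apply in_flat_map in HC; destruct HC as [t [Ht HC]].
      eapply in_Cs; eauto using L1.
Qed.

Lemma good_rt x y : clos_refl_trans sample step x y -> Good x -> Good y.
Proof. induction 1; eauto using good_step. Qed.

Lemma good_list g : Good g ->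
  In g (flat_map (fun C => map (fun b => plug C b) Base) Cs).
Proof.
  intros [C [b [E [HC Hb]]]]; subst. apply in_flat_map; exists C; split; auto.
  apply in_map; auto.
Qed.

End Main.

Lemma finite_sub (S : sample -> Prop) (M : list sample) :
  (forall b, S b -> In b M) -> finite_set S.
Proof.
  intros H.
  assert (G : forall M', exists L', forall b, (S b /\ In b M') <-> In b L').
  { induction M' as [|a M' IH].
    - exists []; simpl; tauto.
    - destruct IH as [L' HL]. destruct (classic (S a)) as [Ha|Ha].
      + exists (a :: L'); intros b; simpl; rewrite <- HL; split.
        * intros [Hb [E|Hi]]; auto.
        * intros [E|[Hb Hi]]; subst; auto.
      + exists L'; intros b; simpl; rewrite <- HL; split.
        * intros [Hb [E|Hi]]; subst; auto; contradiction.
        * intros [Hb Hi]; auto. }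
  destruct (G M) as [L' HL]; exists L'; intros b; rewrite <- HL; split; auto.
  intros [Hb _]; auto.
Qed.

Theorem lemma3p2 (Delta : sample -> Prop) :
  finite_set Delta -> finite_set (saturation Delta).
Proof.
  intros [L HL].
  apply (finite_sub _ (flat_map (fun C => map (fun b => plug C b) (Base L)) (Cs L))).
  intros b [a [Ha Hr]]. apply good_list. apply (good_rt L a); auto.
  exists [], a; split; [reflexivity|split; [left; reflexivity|]].
  unfold Base; apply in_or_app; left; apply in_flat_map; exists a; split.
  - apply HL; auto.
  - destruct a; simpl; auto.
Qed.
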